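(* Assume $F$ is $\beta$-smooth and $T\ge2$. Run the framework with $\eta\le\frac{1}{\beta T}$. Then for any iteration $t\ge1$ of round $r\ge1$ and any client $i$, $$\|x^{(i)}_{r+1,t}-x_r\|^2\le2\eta^2T\sum_{\tau=1}^tS^{t-\tau}\,\Xi^{(i)}_{r+1,\tau}+22\eta^2T^2\|\nabla F(x_r)\|^2,$$ where $S=\frac{(T+1)^2}{T(T-1)}$ and $\Xi^{(i)}_{r,t}=\|\widehat g^{(i)}_{r,t-1}-\nabla F(x^{(i)}_{r,t-1})\|^2$.
   Context: **Objective.** $F=\frac1N\sum_{i=1}^Nf_i$ is the global objective of $N$ clients. **Framework.** For each round $r$: - each client sets $x^{(i)}_{r,0}=x_{r-1}$ and for $t=1,\dots,T$ updates $x^{(i)}_{r,t}=x^{(i)}_{r,t-1}-\eta\widehat g^{(i)}_{r,t-1}$, where $\widehat g^{(i)}_{r,t-1}$ is an arbitrary gradient estimate; - the server sets $x_r=\frac1N\sum_ix^{(i)}_{r,T}$. *)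

(* Defs.v *)
From HB Require Import structures.
From mathcomp Require Import all_boot all_order all_algebra.
From mathcomp Require Import all_classical all_reals all_analysis.
Set Implicit Arguments. Unset Strict Implicit. Unset Printing Implicit Defensive.
Import Order.TTheory GRing.Theory Num.Theory.
Import numFieldNormedType.Exports.
Local Open Scope ring_scope.

Definition dotv (R : realType) (d : nat) (u v : 'rV[R]_d) : R :=
  \sum_(j < d) u ord0 j * v ord0 j.
Definition sqnorm (R : realType) (d : nat) (u : 'rV[R]_d) : R := dotv u u.
Definition enorm (R : realType) (d : nat) (u : 'rV[R]_d) : R := Num.sqrt (sqnorm u).

Definition is_gradient (R : realType) (d : nat)
    (F : 'rV[R]_d -> R) (gradF : 'rV[R]_d -> 'rV[R]_d) : Prop :=
  forall x : 'rV[R]_d, differentiable F x /\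
    forall h : 'rV[R]_d, 'd F x h = dotv (gradF x) h.

Definition smooth (R : realType) (d : nat) (beta : R)
    (F : 'rV[R]_d -> R) (gradF : 'rV[R]_d -> 'rV[R]_d) : Prop :=
  is_gradient F gradF /\
  forall x y : 'rV[R]_d, enorm (gradF x - gradF y) <= beta * enorm (x - y).

Definition global_obj (R : realType) (d N : nat) (f : 'I_N -> 'rV[R]_d -> R)
  : 'rV[R]_d -> R := fun x => N%:R^-1 * \sum_(i < N) f i x.

(* The framework: xc r i t = x^{(i)}_{r,t}, xs r = x_r (xs 0 = initial point),
   g r i t = \hat g^{(i)}_{r,t} (arbitrary gradient estimates). *)
Definition framework (R : realType) (d N T : nat) (eta : R)
    (xs : nat -> 'rV[R]_d) (xc : nat -> 'I_N -> nat -> 'rV[R]_d)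
    (g : nat -> 'I_N -> nat -> 'rV[R]_d) : Prop :=
  (forall r i, (1 <= r)%N -> xc r i 0%N = xs r.-1) /\
  (forall r i t, (1 <= r)%N -> (1 <= t <= T)%N ->
      xc r i t = xc r i t.-1 - eta *: g r i t.-1) /\
  (forall r, (1 <= r)%N -> xs r = N%:R^-1 *: \sum_(i < N) xc r i T).

(* Main.v *)
Require Import Defs.
From HB Require Import structures.
From mathcomp Require Import all_boot all_order all_algebra.
From mathcomp Require Import all_classical all_reals all_analysis.
From mathcomp Require Import ring lra zify.
From Stdlib Require Import Lia.
Import Order.TTheory GRing.Theory Num.Theory.
Local Open Scope ring_scope.

Lemma expR1_le (R : realType) : expR (1:R) <= (4/3) ^+ 4.
Proof.
have h1 : 3/4 <= expR (- (1/4) : R).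
  by apply: le_trans (expR_ge1Dx _); lra.
have h2 : (3/4) ^+ 4 <= expR (-1 : R).
  have -> : (-1 : R) = 4%:R * (- (1/4)) by rewrite /=; lra.
  rewrite expRM_natl; apply: lerXn2r => //; rewrite ?nnegrE //; lra.
rewrite -[expR 1]invrK -expRN.
have p : 0 < (3/4:R) ^+ 4 by apply: exprn_gt0; lra.
have -> : (4/3 : R) ^+ 4 = ((3/4) ^+ 4)^-1 by rewrite -exprVn; congr (_ ^+ _); field.
by rewrite lef_pV2 // ?posrE // expR_gt0.
Qed.

Lemma onep_le (R : realType) (n : nat) : (0 < n)%N -> (1 + n%:R^-1 : R) ^+ n <= expR 1.
Proof.
move=> n0.
have npos : (0:R) < n%:R by rewrite ltr0n.
have -> : expR (1:R) = expR (n%:R^-1) ^+ n.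
  by rewrite -expRM_natl divff // gt_eqF.
apply: lerXn2r; rewrite ?nnegrE.
- by apply: addr_ge0 => //; rewrite invr_ge0 ltW.
- exact: expR_ge0.
- exact: expR_ge1Dx.
Qed.

Lemma E3_le (R : realType) : expR (1:R) ^+ 3 <= 34.
Proof.
have h := expR1_le R.
have h0 : 0 <= expR (1:R) by exact: expR_ge0.
apply: (le_trans (y := ((4/3 : R) ^+ 4) ^+ 3)).
  by apply: lerXn2r; rewrite ?nnegrE //; apply: le_trans h.
rewrite -exprM /=.
rewrite !exprS expr0; lra.
Qed.

Lemma geom_bound (R : realType) (T t : nat) : (2 <= T)%N -> (t <= T)%N ->
  \sum_(k < t) ((T%:R + 1) ^+ 2 / (T%:R * (T%:R - 1)) : R) ^+ k <= 11 * T%:R.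
Proof.
move=> T2 tT.
set S := (T%:R + 1) ^+ 2 / (T%:R * (T%:R - 1)) : R.
have [m Tm] : exists m, T = m.+1 by exists T.-1; rewrite prednK //; lia.
have m1 : (1 <= m)%N by lia.
have mpos : (1:R) <= m%:R by rewrite ler1n.
have xE : (T%:R : R) = m%:R + 1 by rewrite Tm -addn1 natrD.
set y : R := m%:R^-1.
have my : m%:R * y = 1 by rewrite /y divff // gt_eqF //; lra.
have y0 : 0 < y by rewrite /y invr_gt0; lra.
have SE : S = (1 + T%:R^-1) ^+ 2 * (1 + y).
  rewrite /S /y xE; field.
  by rewrite !gt_eqF //; lra.
have S1 : S - 1 = (3 * m%:R + 4) * y / (m%:R + 1).
  rewrite /S /y xE; field.
  by rewrite !gt_eqF //; lra.
have S1pos : 0 < S - 1.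
  rewrite S1; apply: divr_gt0; last lra.
  apply: mulr_gt0 => //; lra.
have Sge1 : 1 <= S by lra.
have sumE : \sum_(k < t) S ^+ k = (S ^+ t - 1) / (S - 1).
  by rewrite subrX1 [(S - 1) * _]mulrC mulfK // gt_eqF.
rewrite sumE ler_pdivrMr //.
have StT : S ^+ t <= S ^+ T by apply: ler_weXn2l.
set A := (1 + T%:R^-1 : R) ^+ T.
set B := (1 + y) ^+ m.
have A0 : 0 <= A by apply: exprn_ge0; rewrite addr_ge0 // invr_ge0 ler0n.
have B0 : 0 <= B by apply: exprn_ge0; lra.
have AE : A <= expR 1 by apply: onep_le; lia.
have BE : B <= expR 1 by apply: onep_le; lia.
have ST : S ^+ T = A * A * B * (1 + y).
  have eB : (1 + y) ^+ T = B * (1 + y) by rewrite /B Tm exprSr.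
  rewrite SE exprMn -exprM mul2n -addnn exprD eB /A; ring.
have ABE : A * A * B <= 34.
  apply: le_trans (E3_le R).
  rewrite (exprS _ 2) (exprS _ 1) expr1 mulrA.
  apply: ler_pM; rewrite ?mulr_ge0 //.
  by apply: ler_pM.
have h1 : A * A * B * y <= 34 * y by apply: ler_wpM2r => //; lra.
apply: (le_trans (y := S ^+ T - 1)); first by lra.
rewrite S1 xE ST.
have -> : 11 * (m%:R + 1) * ((3 * m%:R + 4) * y / (m%:R + 1)) = 11 * (3 * m%:R + 4) * y :> R.
  by field; rewrite gt_eqF //; lra.
nra.
Qed.

Section Vec.
Variables (R : realType) (d : nat).
Implicit Types (a b : 'rV[R]_d).

Lemma sqnorm_ge0 a : 0 <= sqnorm a.
Proof. by apply: sumr_ge0 => j _; rewrite -expr2 sqr_ge0. Qed.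

Lemma sqnormZ (c : R) a : sqnorm (c *: a) = c ^+ 2 * sqnorm a.
Proof.
rewrite /sqnorm /dotv mulr_sumr; apply: eq_bigr => j _; rewrite !mxE; ring.
Qed.

Lemma young a b (c : R) : 0 < c ->
  sqnorm (a + b) <= (1 + c) * sqnorm a + (1 + c^-1) * sqnorm b.
Proof.
move=> c0; rewrite /sqnorm /dotv !mulr_sumr -big_split /=.
apply: ler_sum => j _; rewrite !mxE.
set x := a ord0 j; set z := b ord0 j.
have ci : c * c^-1 = 1 by rewrite divff // gt_eqF.
have ci0 : 0 < c^-1 by rewrite invr_gt0.
have h : 0 <= (c * x - z) ^+ 2 * c^-1 by rewrite mulr_ge0 // ?sqr_ge0 // ltW.
have e : (c * x - z) ^+ 2 * c^-1 = c * x * x * (c * c^-1) - 2 * x * z * (c * c^-1) + z * z * c^-1 by ring.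
rewrite e ci !mulr1 in h.
rewrite -subr_ge0.
have -> : (1 + c) * (x * x) + (1 + c^-1) * (z * z) - (x + z) * (x + z) =
  c * x * x - 2 * x * z + z * z * c^-1 by ring.
exact: h.
Qed.

Lemma sqnorm_le_of_enorm a b (k : R) : 0 <= k -> enorm a <= k * enorm b ->
  sqnorm a <= k ^+ 2 * sqnorm b.
Proof.
move=> k0 h.
have ea : sqnorm a = enorm a ^+ 2 by rewrite /enorm sqr_sqrtr // sqnorm_ge0.
have eb : sqnorm b = enorm b ^+ 2 by rewrite /enorm sqr_sqrtr // sqnorm_ge0.
have a0 : 0 <= enorm a by exact: sqrtr_ge0.
have b0 : 0 <= enorm b by exact: sqrtr_ge0.
rewrite ea eb -exprMn; apply: lerXn2r => //; rewrite nnegrE // mulr_ge0 //.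
Qed.
End Vec.

Lemma unroll (R : realType) (S A B : R) (u X : nat -> R) (T : nat) :
  0 <= S -> u 0%N = 0 ->
  (forall t, (1 <= t <= T)%N -> u t <= S * u t.-1 + A * X t + B) ->
  forall t, (t <= T)%N ->
  u t <= A * (\sum_(1 <= tau < t.+1) S ^+ (t - tau) * X tau) + B * \sum_(k < t) S ^+ k.
Proof.
move=> S0 u0 rec; elim=> [|t IH] tT.
  by rewrite big_geq // big_ord0 u0 !mulr0 addr0.
apply: le_trans (rec t.+1 _) _; first by rewrite /= tT.
rewrite /=.
have IH' := IH (ltnW tT).
have e1 : \sum_(1 <= tau < t.+2) S ^+ (t.+1 - tau) * X tau =
    S * (\sum_(1 <= tau < t.+1) S ^+ (t - tau) * X tau) + X t.+1.
  rewrite big_nat_recr //= subnn expr0 mul1r mulr_sumr; congr (_ + _).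
  apply: eq_big_nat => tau /andP[_ h]; rewrite subSn // exprS; ring.
have e2 : \sum_(k < t.+1) S ^+ k = 1 + S * \sum_(k < t) S ^+ k.
  by rewrite big_ord_recl expr0 mulr_sumr; congr (_ + _); apply: eq_bigr => k _; rewrite exprS.
rewrite e1 e2.
have h := ler_wpM2l S0 IH'.
set P := \sum_(1 <= tau < t.+1) S ^+ (t - tau) * X tau.
set Q := \sum_(k < t) S ^+ k.
have -> : A * (S * P + X t.+1) + B * (1 + S * Q) = S * (A * P + B * Q) + A * X t.+1 + B by ring.
by rewrite lerD2r lerD2r.
Qed.

Theorem lemmaC11 (R : realType) (d N T : nat) (beta eta : R)
    (f : 'I_N -> 'rV[R]_d -> R) (gradF : 'rV[R]_d -> 'rV[R]_d)
    (xs : nat -> 'rV[R]_d) (xc : nat -> 'I_N -> nat -> 'rV[R]_d)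
    (g : nat -> 'I_N -> nat -> 'rV[R]_d) :
  (0 < N)%N -> 0 < beta ->
  smooth beta (global_obj f) gradF ->
  (2 <= T)%N ->
  0 < eta -> eta <= (beta * T%:R)^-1 ->
  framework T eta xs xc g ->
  let S := (T%:R + 1) ^+ 2 / (T%:R * (T%:R - 1)) in
  let Xi := fun (r : nat) (i : 'I_N) (t : nat) =>
    sqnorm (g r i t.-1 - gradF (xc r i t.-1)) in
  forall (r t : nat) (i : 'I_N), (1 <= r)%N -> (1 <= t <= T)%N ->
    sqnorm (xc r.+1 i t - xs r) <=
      2 * eta ^+ 2 * T%:R * (\sum_(1 <= tau < t.+1) S ^+ (t - tau) * Xi r.+1 i tau)
      + 22 * eta ^+ 2 * T%:R ^+ 2 * sqnorm (gradF (xs r)).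
Proof.
move=> N0 b0 [_ lip] T2 eta0 etale [h0 [hstep _]] S Xi r t i r1 /andP[t1 tT].
set G := gradF (xs r).
set x : R := T%:R.
have x2 : 2 <= x by rewrite /x (ler_nat R 2 T).
pose u := fun s => sqnorm (xc r.+1 i s - xs r).
have S0 : 0 <= S.
  by rewrite /S divr_ge0 // ?sqr_ge0 // mulr_ge0 //; rewrite -/x; lra.
have ebx : eta * beta <= x^-1.
  have hb : (beta * x)^-1 = beta^-1 * x^-1 by rewrite invfM.
  rewrite hb in etale.
  have := ler_wpM2r (ltW b0) etale.
  by rewrite mulrAC mulVf ?mul1r // gt_eqF.
have eb0 : 0 < eta * beta by apply: mulr_gt0.
have rec : forall s, (1 <= s <= T)%N ->
    u s <= S * u s.-1 + (2 * eta ^+ 2 * x) * Xi r.+1 i s + (2 * eta ^+ 2 * x * sqnorm G).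
  move=> s /andP[s1 sT].
  set e := xc r.+1 i s.-1 - xs r.
  set D := gradF (xc r.+1 i s.-1) - G.
  set dl := g r.+1 i s.-1 - gradF (xc r.+1 i s.-1).
  have decomp : xc r.+1 i s - xs r = (e + (- eta) *: D) + (- eta) *: (dl + G).
    rewrite (hstep r.+1 i s) //; last by rewrite s1 sT.
    by apply/rowP => j; rewrite !mxE; ring.
  have c1pos : 0 < (x - 1)^-1 by rewrite invr_gt0; lra.
  have Y1 := young _ _ (e + (- eta) *: D) ((- eta) *: (dl + G)) _ c1pos.
  rewrite invrK -decomp in Y1.
  have hD : sqnorm D <= beta ^+ 2 * sqnorm e.
    apply: sqnorm_le_of_enorm; first exact: ltW.
    exact: (lip (xc r.+1 i s.-1) (xs r)).
  have Y2 := young _ _ e ((- eta) *: D) _ eb0.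
  rewrite sqnormZ sqrrN in Y2.
  have P1 : sqnorm (e + (- eta) *: D) <= (1 + x^-1) ^+ 2 * sqnorm e.
    apply: le_trans Y2 _.
    have se0 := sqnorm_ge0 _ _ e.
    have hD' : eta ^+ 2 * sqnorm D <= eta ^+ 2 * (beta ^+ 2 * sqnorm e).
      by apply: ler_wpM2l => //; rewrite sqr_ge0.
    have ib0 : 0 <= 1 + (eta * beta)^-1 by rewrite addr_ge0 // invr_ge0 ltW.
    apply: le_trans (lerD (lexx _) (ler_wpM2l ib0 hD')) _.
    have -> : (1 + eta * beta) * sqnorm e + (1 + (eta * beta)^-1) * (eta ^+ 2 * (beta ^+ 2 * sqnorm e))
        = (1 + eta * beta) ^+ 2 * sqnorm e.
      by field; rewrite !gt_eqF.
    apply: ler_wpM2r => //; apply: lerXn2r; rewrite ?nnegrE; try lra.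
  have Y3 := young _ _ dl G _ (ltr01 : (0:R) < 1).
  rewrite invr1 in Y3.
  have P2 : sqnorm ((- eta) *: (dl + G)) <= eta ^+ 2 * (2 * sqnorm dl + 2 * sqnorm G).
    rewrite sqnormZ sqrrN; apply: ler_wpM2l; first by rewrite sqr_ge0.
    by apply: le_trans Y3 _; lra.
  have c10 : 0 <= 1 + (x - 1)^-1 by rewrite addr_ge0 // ltW.
  have x1 : 0 <= 1 + (x - 1) by lra.
  apply: le_trans Y1 _.
  apply: le_trans (lerD (ler_wpM2l c10 P1) (ler_wpM2l x1 P2)) _.
  rewrite /u /= -/e -/(Xi r.+1 i s).
  have -> : (1 + (x - 1)^-1) * ((1 + x^-1) ^+ 2 * sqnorm e) = S * sqnorm e.
    by rewrite /S -/x; field; rewrite !gt_eqF //; lra.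
  rewrite /Xi -/dl.
  by rewrite le_eqVlt; apply/orP; left; apply/eqP; ring.
have U := @unroll R S (2 * eta ^+ 2 * x) (2 * eta ^+ 2 * x * sqnorm G)
  u (Xi r.+1 i) T S0.
have u0 : u 0%N = 0.
  by rewrite /u h0 // subrr /sqnorm /dotv big1 // => j _; rewrite mxE mul0r.
have := U u0 rec t tT.
rewrite /u => H; apply: le_trans H _.
rewrite lerD2l.
have gb := @geom_bound R T t T2 tT.
have B0 : 0 <= 2 * eta ^+ 2 * x * sqnorm G.
  by rewrite !mulr_ge0 ?sqnorm_ge0 ?sqr_ge0 //; lra.
apply: le_trans (ler_wpM2l B0 gb) _.
rewrite -/x le_eqVlt; apply/orP; left; apply/eqP; ring.
Qed.
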